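(* Let $c, r$ be positive integers. Call a set of squares of an $m \times n$ grid a valid $(c,r)$-tree configuration if every column contains exactly $c$ of the chosen squares (trees), every row contains exactly $r$ trees, and no two trees are in squares adjacent horizontally, vertically, or diagonally. Then: (i) if a valid $(c,r)$-tree configuration exists on an $m \times n$ grid with $(m,n) \neq (1,1)$, then $m \ge 4c$ and $n \ge 4r$ (the $1 \times 1$ grid admits one only when $c=r=1$); (ii) the $4c \times 4r$ grid admits exactly two valid $(c,r)$-tree configurations. Index rows $1,\dots,4c$ from top and columns $1,\dots,4r$ from left. These configurations are the following. The first has trees at $(2i-1,2j)$ for $1\le i\le c,\ 1\le j\le r$; at $(2i,2j)$ for $1\le i\le c,\ r<j\le 2r$; at $(2i-1,2j-1)$ for $c<i\le 2c,\ 1\le j\le r$; and at $(2i,2j-1)$ for $c<i\le 2c,\ r<j\le 2r$. The second is the image of the first under the row reflection $(k,\ell)\mapsto(4c+1-k,\ell)$.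
   Context: A valid configuration of trees for a $(c,r)$-tree Parks puzzle on an $m\times n$ grid is a set of squares satisfying the column, row and non-adjacency conditions stated in the claim. The paper calls the two configurations on the $4c\times 4r$ grid ''Shuriken arrangements''. Equivalently: divide the $4c\times 4r$ grid into $2\times 2$ boxes and into four quadrants of size $2c \times 2r$. Within each quadrant every box has its tree in the same position. In the first arrangement this position is the top-right cell of the box in the upper-left quadrant, the bottom-right cell in the upper-right quadrant, the top-left cell in the lower-left quadrant, and the bottom-left cell in the lower-right quadrant. *)

(* Defs.v *)
From mathcomp Require Import all_boot.
Set Implicit Arguments. Unset Strict Implicit. Unset Printing Implicit Defensive.

(* An m x n grid: cells are pairs (row, column) in 'I_m * 'I_n (0-indexed;
   row k here is row k+1 of the paper, counted from the top). *)

Definition king_adj (m n : nat) (p q : 'I_m * 'I_n) : bool :=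
  [&& p != q,
      (p.1 <= q.1 + 1) && (q.1 <= p.1 + 1) &
      (p.2 <= q.2 + 1) && (q.2 <= p.2 + 1)].

Definition valid_config (c r m n : nat) (S : {set 'I_m * 'I_n}) : Prop :=
  (forall j : 'I_n, #|[set p in S | p.2 == j]| = c) /\
  (forall i : 'I_m, #|[set p in S | p.1 == i]| = r) /\
  (forall p q, p \in S -> q \in S -> ~~ king_adj p q).

(* First Shuriken arrangement on the 4c x 4r grid, stated in 1-indexed
   coordinates (k, l) = (row+1, column+1) exactly as in the paper. *)
Definition shuriken1_at (c r k l : nat) : bool :=
  [exists i : 'I_(2 * c).+1, exists j : 'I_(2 * r).+1,
     [&& 0 < i, 0 < j &
       [|| [&& i <= c, j <= r, k == 2 * i - 1 & l == 2 * j],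
           [&& i <= c, r < j, k == 2 * i & l == 2 * j],
           [&& c < i, j <= r, k == 2 * i - 1 & l == 2 * j - 1] |
           [&& c < i, r < j, k == 2 * i & l == 2 * j - 1]]]].

Definition shuriken1 (c r : nat) : {set 'I_(4 * c) * 'I_(4 * r)} :=
  [set p : 'I_(4 * c) * 'I_(4 * r) | shuriken1_at c r p.1.+1 p.2.+1].

Definition shuriken2 (c r : nat) : {set 'I_(4 * c) * 'I_(4 * r)} :=
  [set p : 'I_(4 * c) * 'I_(4 * r) | (rev_ord p.1, p.2) \in shuriken1 c r].

(* Main.v *)
Require Import Defs.
From mathcomp Require Import all_boot zify.
From Stdlib Require Import Classical.
Set Implicit Arguments. Unset Strict Implicit. Unset Printing Implicit Defensive.

Lemma sum_le1 (h : nat -> nat) N : (forall a, a < N -> h a <= 1) -> \sum_(a < N) h a <= N.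
Proof.
move=> H; rewrite -[X in _ <= X]card_ord -sum1_card.
by apply: leq_sum => i _; apply: H.
Qed.

Lemma all_one (h : nat -> nat) k : (forall a, a < k -> h a <= 1) ->
  \sum_(a < k) h a = k -> forall a, a < k -> h a = 1.
Proof.
elim: k => [|k IH] H; first by [].
rewrite big_ord_recr /= => Hs.
set s := (X in X + h k = _) in Hs.
have H1 : s <= k by rewrite /s; apply: sum_le1 => a ha; apply: H; lia.
have H2 := H k (ltnSn k).
move=> a; rewrite ltnS leq_eqVlt => /orP [/eqP -> | ha]; first lia.
apply: IH => //; [move=> b hb; apply: H; lia | rewrite -/s; lia].
Qed.

Lemma pair_sum (g : nat -> nat) k :
  \sum_(i < 2 * k) g i = \sum_(a < k) (g (2 * a) + g (2 * a).+1).
Proof.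
elim: k => [|k IH]; first by rewrite !big_ord0.
rewrite (_ : 2 * k.+1 = (2 * k).+2); last lia.
rewrite !big_ord_recr /= IH addnA; congr (_ + _ + _); congr g; lia.
Qed.

Lemma nc_bound (g : nat -> nat) : (forall i, g i + g i.+1 <= 1) ->
  forall L s, 2 * \sum_(i < L) g (s + i) <= L + 1.
Proof.
move=> H L s.
suff : 2 * \sum_(i < L) g (s + i) <= L + 1 /\ 2 * \sum_(i < L.+1) g (s + i) <= L.+1 + 1 by case.
elim: L => [|L [IH1 IH2]]; first by rewrite big_ord0 big_ord1 /= addn0; have := H s; lia.
split; first exact: IH2.
rewrite !big_ord_recr /=.
set S := (\sum_(i < L) g (s + i)) in IH1 *.
have := H (s + L); rewrite -addnS; lia.
Qed.

Lemma sum_compl (h : nat -> nat) N : (forall a, a < N -> h a <= 1) ->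
  \sum_(a < N) (1 - h a) = N - \sum_(a < N) h a.
Proof.
move=> H.
have : \sum_(a < N) (1 - h a) + \sum_(a < N) h a = N.
  rewrite -big_split /= -[X in _ = X]card_ord -sum1_card.
  by apply: eq_bigr => i _; have := H i (ltn_ord i); lia.
lia.
Qed.

Lemma mono_form (h : nat -> nat) N : (forall a, a < N -> h a <= 1) ->
  (forall a, a.+1 < N -> h a <= h a.+1) ->
  forall a, a < N -> (h a = 1 <-> N - \sum_(i < N) h i <= a).
Proof.
elim: N => [|N IH] H1 H2 a ha; first by [].
rewrite big_ord_recr /=.
set S := \sum_(i < N) h i in IH *.
have IH' := IH (fun b hb => H1 b (ltnW hb)) (fun b hb => H2 b (ltnW hb)).
have hN := H1 N (ltnSn N).
have hs : S <= N by rewrite /S; apply: sum_le1 => b hb; apply: H1; lia.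
have ha1 := H1 a ha.
case: (ltnP a N) => hlt.
  have := IH' a hlt.
  case: N {IH} S IH' H1 H2 hN hs ha hlt ha1 => [|N] S IH' H1 H2 hN hs ha hlt ha1; first lia.
  have hNm := H2 N (ltnSn _).
  have IHN := IH' N (ltnSn _).
  lia.
have -> : a = N by lia.
case: N {IH} S IH' H1 H2 hN hs ha hlt ha1 => [|N] S IH' H1 H2 hN hs ha hlt ha1; first lia.
have hNm := H2 N (ltnSn _).
have IHN := IH' N (ltnSn _).
lia.
Qed.

Lemma half_sum (h : nat -> nat) k : (forall a, a < 2 * k -> h a <= 1) ->
  ((forall a, a < 2 * k -> (h a = 1 <-> a < k)) \/
   (forall a, a < 2 * k -> (h a = 1 <-> k <= a))) ->
  \sum_(a < 2 * k) h a = k.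
Proof.
move=> H1 H2.
rewrite (_ : 2 * k = k + k); last lia.
rewrite big_split_ord /=.
case: H2 => H2.
- rewrite (eq_bigr (fun _ => 1)); last first.
    move=> i _; have := H2 (lshift k i); have := ltn_ord i; rewrite /=; lia.
  rewrite [X in _ + X](eq_bigr (fun _ => 0)); last first.
    move=> i _; have := H2 (rshift k i); have := H1 (rshift k i); have := ltn_ord i; rewrite /=; lia.
  by rewrite !big_const_ord !iter_addn_0; lia.
- rewrite (eq_bigr (fun _ => 0)); last first.
    move=> i _; have := H2 (lshift k i); have := H1 (lshift k i); have := ltn_ord i; rewrite /=; lia.
  rewrite [X in _ + X](eq_bigr (fun _ => 1)); last first.
    move=> i _; have := H2 (rshift k i); have := ltn_ord i; rewrite /=; lia.
  by rewrite !big_const_ord !iter_addn_0; lia.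
Qed.
Definition fS m n (S : {set 'I_m * 'I_n}) (i j : nat) : nat :=
  if (insub i : option 'I_m) is Some i' then
    if (insub j : option 'I_n) is Some j' then ((i', j') \in S : nat) else 0
  else 0.
Lemma fS_ord m n (S : {set 'I_m * 'I_n}) (i : 'I_m) (j : 'I_n) : fS S i j = ((i, j) \in S).
Proof. by rewrite /fS !valK. Qed.
Lemma cardcol m n (S : {set 'I_m * 'I_n}) (j : 'I_n) :
  #|[set p in S | p.2 == j]| = \sum_(i < m) fS S i j.
Proof.
have -> : [set p in S | p.2 == j] = [set (i, j) | i in [set i | (i, j) \in S]].
  apply/setP => -[i j']; rewrite !inE /=; apply/andP/imsetP.
    by case=> hS /eqP ej; subst j'; exists i; rewrite ?inE.
  by case=> i' hi' [-> ->]; rewrite inE in hi'.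
rewrite card_imset; last by move=> x y [].
rewrite -sum1_card big_mkcond /=; apply: eq_bigr => i _.
by rewrite fS_ord inE; case: (_ \in S).
Qed.
Lemma cardrow m n (S : {set 'I_m * 'I_n}) (i : 'I_m) :
  #|[set p in S | p.1 == i]| = \sum_(j < n) fS S i j.
Proof.
have -> : [set p in S | p.1 == i] = [set (i, j) | j in [set j | (i, j) \in S]].
  apply/setP => -[i' j]; rewrite !inE /=; apply/andP/imsetP.
    by case=> hS /eqP ei; subst i'; exists j; rewrite ?inE.
  by case=> j' hj' [-> ->]; rewrite inE in hj'.
rewrite card_imset; last by move=> x y [].
rewrite -sum1_card big_mkcond /=; apply: eq_bigr => j _.
by rewrite fS_ord inE; case: (_ \in S).
Qed.

Lemma fS_le1 m n (S : {set 'I_m * 'I_n}) i j : fS S i j <= 1.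
Proof. rewrite /fS. case: insubP => [i' _ _|_] //. case: insubP => [j' _ _|_] //. by case: (_ \in S). Qed.

Lemma fS_1 m n (S : {set 'I_m * 'I_n}) i j : fS S i j = 1 ->
  exists (hi : i < m) (hj : j < n), (Ordinal hi, Ordinal hj) \in S.
Proof.
rewrite /fS; case: insubP => // i' hi ei; case: insubP => // j' hj ej E.
exists hi, hj.
have -> : Ordinal hi = i' by apply: val_inj.
have -> : Ordinal hj = j' by apply: val_inj.
by case: ((i', j') \in S) E.
Qed.

Definition Hyp m n c r (f : nat -> nat -> nat) : Prop :=
  [/\ forall i j, f i j <= 1,
      forall j, j < n -> \sum_(i < m) f i j = c,
      forall i, i < m -> \sum_(j < n) f i j = r &
      forall i j i' j', f i j = 1 -> f i' j' = 1 -> i <= i' + 1 -> i' <= i + 1 ->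
        j <= j' + 1 -> j' <= j + 1 -> i = i' /\ j = j'].

Lemma valid_hyp m n c r (S : {set 'I_m * 'I_n}) : valid_config c r S -> Hyp m n c r (fS S).
Proof.
case=> Hc [Hr Ha]; split.
- exact: fS_le1.
- by move=> j hj; rewrite -(Hc (Ordinal hj)) cardcol.
- by move=> i hi; rewrite -(Hr (Ordinal hi)) cardrow.
- move=> i j i' j' /fS_1 [hi [hj hp]] /fS_1 [hi' [hj' hq]] h1 h2 h3 h4.
  have : (Ordinal hi, Ordinal hj) == (Ordinal hi', Ordinal hj').
    apply: contraR (Ha _ _ hp hq) => hne; rewrite /king_adj hne /=; lia.
  by move/eqP => [].
Qed.

Lemma hyp_valid m n c r (S : {set 'I_m * 'I_n}) : Hyp m n c r (fS S) -> valid_config c r S.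
Proof.
case=> H1 Hc Hr Ha; split; [|split].
- by move=> j; rewrite cardcol Hc.
- by move=> i; rewrite cardrow Hr.
- move=> [i j] [i' j'] hp hq; apply/negP; rewrite /king_adj /= => /and3P [hne /andP [h1 h2] /andP [h3 h4]].
  have f1 : fS S i j = 1 by rewrite fS_ord hp.
  have f2 : fS S i' j' = 1 by rewrite fS_ord hq.
  have [e1 e2] := Ha i j i' j' f1 f2 h1 h2 h3 h4.
  move: e1 e2 => /val_inj e1 /val_inj e2; subst i' j'.
  by rewrite eqxx in hne.
Qed.

Lemma hyp_T m n c r f : Hyp m n c r f -> Hyp n m r c (fun i j => f j i).
Proof.
case=> H1 Hc Hr Ha; split => //.
move=> i j i' j' e1 e2 h1 h2 h3 h4.
by have [-> ->] := Ha j i j' i' e1 e2 h3 h4 h1 h2.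
Qed.

Lemma box m n c r f : Hyp m n c r f -> forall i j,
  f i j + f i j.+1 + f i.+1 j + f i.+1 j.+1 <= 1.
Proof.
case=> H1 _ _ Ha i j.
have := H1 i j; have := H1 i j.+1; have := H1 i.+1 j; have := H1 i.+1 j.+1.
have := Ha i j i j.+1; have := Ha i j i.+1 j; have := Ha i j i.+1 j.+1;
have := Ha i j.+1 i.+1 j; have := Ha i j.+1 i.+1 j.+1; have := Ha i.+1 j i.+1 j.+1.
lia.
Qed.

Lemma n1 m c r f : Hyp m 1 c r f -> 0 < r -> 1 < m -> False.
Proof.
move=> H hr hm; case: H => H1 _ Hr Ha.
have := Hr 0 (ltnW hm); have := Hr 1 hm; rewrite !big_ord1 /= => e1 e0.
have := H1 0 0; have := H1 1 0; have := Ha 0 0 1 0.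
lia.
Qed.

Lemma exists_pos n (F : nat -> nat) : 0 < \sum_(j < n) F j -> exists2 j, j < n & 0 < F j.
Proof.
elim: n => [|n IH]; first by rewrite big_ord0.
rewrite big_ord_recr /= => hs.
case: (posnP (F n)) => hF; last by exists n.
rewrite hF addn0 in hs.
have [j hj hFj] := IH hs.
by exists j => //; apply: ltnW.
Qed.

Lemma split3 (g : nat -> nat) L : \sum_(i < L.+3) g i = g 0 + g 1 + g 2 + \sum_(i < L) g (3 + i).
Proof.
by rewrite !big_ord_recl /= !addnA; congr (_ + _).
Qed.

Lemma bound m n c r f : Hyp m n c r f -> 0 < c -> 0 < r -> 1 < n -> 4 * c <= m.
Proof.
move=> H hc hr hn; have Hb := box H; case: H => H1 Hc Hr Ha.
have Hg : forall j, j.+1 < n -> \sum_(i < m) (f i j + f i j.+1) = 2 * c.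
  move=> j hj; rewrite big_split /= Hc ?Hc //; [lia | exact: ltnW].
have Hnc : forall j i, (f i j + f i j.+1) + (f i.+1 j + f i.+1 j.+1) <= 1.
  by move=> j i; have := Hb i j; lia.
have B1 : 2 * \sum_(i < m) (f i 0 + f i 1) <= m + 1.
  have := nc_bound (Hnc 0) m 0.
  by rewrite (eq_bigr (fun i : 'I_m => f (0 + i) 0 + f (0 + i) 1)).
have := Hg 0 hn; set s0 := \sum_(i < m) _ => e0.
have {B1 s0 e0} hm : 4 * c <= m + 1 by rewrite -/s0 in B1; lia.
case: (leqP (4 * c) m) => // hlt.
have em : m = (4 * c - 4).+3 by lia.
have hr1 : 0 < \sum_(j < n) f 1 j by rewrite Hr; lia.
have [j hj hfj] := exists_pos hr1.
pose j0 := if j.+1 < n then j else j.-1.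
have hj0 : j0.+1 < n by rewrite /j0; case: ifP => //; lia.
have hg1 : 1 <= f 1 j0 + f 1 j0.+1.
  rewrite /j0; case: ifP => h; first lia.
  have -> : j.-1.+1 = j by lia.
  lia.
have := Hg j0 hj0; rewrite em (split3 (fun i => f i j0 + f i j0.+1)) /=.
have := nc_bound (Hnc j0) (4 * c - 4) 3.
have := Hnc j0 0; have := Hnc j0 1.
set s1 := (X in 2 * X <= _ -> _); set s2 := (X in _ + X = _ -> _).
have -> : s2 = s1 by [].
lia.
Qed.

Lemma blockcol n c r f : Hyp (4 * c) n c r f -> forall j a, j.+1 < n -> a < 2 * c ->
  f (2 * a) j + f (2 * a).+1 j + f (2 * a) j.+1 + f (2 * a).+1 j.+1 = 1.
Proof.
move=> H; have Hb := box H; case: H => H1 Hc Hr Ha j a hj ha.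
have hs : \sum_(a < 2 * c) ((f (2 * a) j + f (2 * a) j.+1) + (f (2 * a).+1 j + f (2 * a).+1 j.+1)) = 2 * c.
  rewrite -(pair_sum (fun i => f i j + f i j.+1)) (_ : 2 * (2 * c) = 4 * c); last lia.
  rewrite big_split /= !Hc //; [lia | exact: ltnW].
have hle : forall b, b < 2 * c -> (f (2 * b) j + f (2 * b) j.+1) + (f (2 * b).+1 j + f (2 * b).+1 j.+1) <= 1.
  by move=> b _; have := Hb (2 * b) j; lia.
have := all_one hle hs ha; lia.
Qed.

Lemma blockrow m c r f : Hyp m (4 * r) c r f -> forall i b, i.+1 < m -> b < 2 * r ->
  f i (2 * b) + f i (2 * b).+1 + f i.+1 (2 * b) + f i.+1 (2 * b).+1 = 1.
Proof. move=> H i b hi hb; have := blockcol (hyp_T H) hi hb; simpl; lia. Qed.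

Lemma mono_inc (h : nat -> nat) k : (forall a, a < 2 * k -> h a <= 1) ->
  \sum_(a < 2 * k) h a = k -> (forall a, a.+1 < 2 * k -> h a <= h a.+1) ->
  forall a, a < 2 * k -> (h a = 1 <-> k <= a).
Proof.
move=> H1 Hs H2 a ha; have := mono_form H1 H2 ha; rewrite Hs; lia.
Qed.

Lemma mono_dec (h : nat -> nat) k : (forall a, a < 2 * k -> h a <= 1) ->
  \sum_(a < 2 * k) h a = k -> (forall a, a.+1 < 2 * k -> h a.+1 <= h a) ->
  forall a, a < 2 * k -> (h a = 1 <-> a < k).
Proof.
move=> H1 Hs H2 a ha.
have H1' : forall a, a < 2 * k -> 1 - h a <= 1 by move=> *; lia.
have H2' : forall a, a.+1 < 2 * k -> 1 - h a <= 1 - h a.+1.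
  by move=> b hb; have := H2 b hb; lia.
have := mono_form H1' H2' ha; rewrite sum_compl // Hs; have := H1 a ha; lia.
Qed.

Definition sh1b c r i j : bool :=
  ((i %% 2 == 1) == (r <= j %/ 2)) && ((j %% 2 == 1) == (i %/ 2 < c)).
Lemma sh1b_2 c r a x b y : x < 2 -> y < 2 ->
  sh1b c r (2 * a + x) (2 * b + y) = ((x == 1) == (r <= b)) && ((y == 1) == (a < c)).
Proof.
move=> hx hy; rewrite /sh1b.
have -> : (2 * a + x) %% 2 = x by lia.
have -> : (2 * b + y) %% 2 = y by lia.
have -> : (2 * a + x) %/ 2 = a by lia.
by have -> : (2 * b + y) %/ 2 = b by lia.
Qed.
Lemma b2 (F : nat) (b : bool) : F = b -> (F = 1 <-> b).
Proof. by case: b => ->. Qed.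
Lemma finA c r a b x y (la tb : nat) (f : nat -> nat -> nat) : x < 2 -> y < 2 ->
  la = (c <= a) -> tb = (b < r) ->
  f (2 * a) (2 * b) + f (2 * a).+1 (2 * b) + f (2 * a) (2 * b).+1 + f (2 * a).+1 (2 * b).+1 = 1 ->
  f (2 * a) (2 * b) + f (2 * a).+1 (2 * b) = la -> f (2 * a) (2 * b) + f (2 * a) (2 * b).+1 = tb ->
  (f (2 * a + x) (2 * b + y) = 1 <-> sh1b c r (2 * a + x) (2 * b + y)).
Proof.
move=> hx hy ela etb e1 e2 e3; apply: b2; rewrite sh1b_2 //.
case: x y hx hy => [|[|x]] [|[|y]] // _ _; rewrite ?addn0 ?addn1; lia.
Qed.
Lemma finB c r a b x y (la tb : nat) (f : nat -> nat -> nat) : a < 2 * c -> x < 2 -> y < 2 ->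
  la = (a < c) -> tb = (r <= b) ->
  f (2 * a) (2 * b) + f (2 * a).+1 (2 * b) + f (2 * a) (2 * b).+1 + f (2 * a).+1 (2 * b).+1 = 1 ->
  f (2 * a) (2 * b) + f (2 * a).+1 (2 * b) = la -> f (2 * a) (2 * b) + f (2 * a) (2 * b).+1 = tb ->
  (f (2 * a + x) (2 * b + y) = 1 <-> sh1b c r (4 * c - (2 * a + x).+1) (2 * b + y)).
Proof.
move=> ha hx hy ela etb e1 e2 e3; apply: b2.
have -> : 4 * c - (2 * a + x).+1 = 2 * (2 * c - 1 - a) + (1 - x) by lia.
rewrite sh1b_2 //; last lia.
case: x y hx hy => [|[|x]] [|[|y]] // _ _; rewrite ?addn0 ?addn1; lia.
Qed.

Lemma uniq44 c r f : 0 < c -> 0 < r -> Hyp (4 * c) (4 * r) c r f ->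
  (forall i j, i < 4 * c -> j < 4 * r -> (f i j = 1 <-> sh1b c r i j)) \/
  (forall i j, i < 4 * c -> j < 4 * r -> (f i j = 1 <-> sh1b c r (4 * c - i.+1) j)).
Proof.
move=> hc hr H.
have BC := blockcol H; have BR := blockrow H; have Hb := box H.
case: H => H1 Hc Hr Ha.
pose L a b := f (2 * a) (2 * b) + f (2 * a).+1 (2 * b).
pose T a b := f (2 * a) (2 * b) + f (2 * a) (2 * b).+1.
have Lh : forall a b, a < 2 * c -> b < 2 * r -> L a b = L a 0.
  move=> a; elim => [|b IH] ha hb //.
  rewrite -IH //; last lia.
  have e1 := BC (2 * b) a ltac:(lia) ha.
  have e2 := BC (2 * b).+1 a ltac:(lia) ha.
  rewrite (_ : (2 * b).+2 = 2 * b.+1) in e2; last lia.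
  rewrite /L; lia.
have Th : forall a b, a < 2 * c -> b < 2 * r -> T a b = T 0 b.
  move=> a b; elim: a => [|a IH] ha hb //.
  rewrite -IH //; last lia.
  have e1 := BR (2 * a) b ltac:(lia) hb.
  have e2 := BR (2 * a).+1 b ltac:(lia) hb.
  rewrite (_ : (2 * a).+2 = 2 * a.+1) in e2; last lia.
  rewrite /T; lia.
pose l a := L a 0; pose t b := T 0 b.
have lle : forall a, l a <= 1 by move=> a; have := Hb (2 * a) (2 * 0); rewrite /l /L; lia.
have tle : forall b, t b <= 1 by move=> b; have := Hb (2 * 0) (2 * b); rewrite /t /T; lia.
have cell : forall a b, a < 2 * c -> b < 2 * r ->
  [/\ f (2 * a) (2 * b) = 1 <-> l a = 1 /\ t b = 1,
      f (2 * a) (2 * b).+1 = 1 <-> l a = 0 /\ t b = 1,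
      f (2 * a).+1 (2 * b) = 1 <-> l a = 1 /\ t b = 0 &
      f (2 * a).+1 (2 * b).+1 = 1 <-> l a = 0 /\ t b = 0].
  move=> a b ha hb.
  have := Lh a b ha hb; have := Th a b ha hb; have := BC (2 * b) a ltac:(lia) ha.
  have := H1 (2 * a) (2 * b); have := H1 (2 * a) (2 * b).+1.
  have := H1 (2 * a).+1 (2 * b); have := H1 (2 * a).+1 (2 * b).+1.
  rewrite /l /t /L /T /= => *; split; lia.
have suml : \sum_(a < 2 * c) l a = c.
  have e := Hc 0 ltac:(lia).
  rewrite (_ : 4 * c = 2 * (2 * c)) in e; last lia.
  rewrite (pair_sum (fun i => f i 0)) in e.
  apply: (etrans _ e); apply: eq_bigr => a _; by rewrite /l /L muln0.
have sumt : \sum_(b < 2 * r) t b = r.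
  have e := Hr 0 ltac:(lia).
  rewrite (_ : 4 * r = 2 * (2 * r)) in e; last lia.
  rewrite (pair_sum (fun j => f 0 j)) in e.
  apply: (etrans _ e); apply: eq_bigr => b _; by rewrite /t /T muln0.
have T1 : forall a b, a.+1 < 2 * c -> b.+1 < 2 * r ->
    l a = 0 -> t b = 0 -> l a.+1 = 1 -> t b.+1 = 1 -> False.
  move=> a b ha hb e1 e2 e3 e4.
  have [_ _ _ c1] := cell a b ltac:(lia) ltac:(lia).
  have [c2 _ _ _] := cell a.+1 b.+1 ha hb.
  have f1 : f (2 * a).+1 (2 * b).+1 = 1 by apply/c1.
  have f2 : f (2 * a.+1) (2 * b.+1) = 1 by apply/c2.
  have := Ha _ _ _ _ f1 f2; lia.
have T2 : forall a b, a.+1 < 2 * c -> b.+1 < 2 * r ->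
    l a = 1 -> t b.+1 = 0 -> l a.+1 = 0 -> t b = 1 -> False.
  move=> a b ha hb e1 e2 e3 e4.
  have [_ _ c1 _] := cell a b.+1 ltac:(lia) hb.
  have [_ c2 _ _] := cell a.+1 b ha ltac:(lia).
  have f1 : f (2 * a).+1 (2 * b.+1) = 1 by apply/c1.
  have f2 : f (2 * a.+1) (2 * b).+1 = 1 by apply/c2.
  have := Ha _ _ _ _ f1 f2; lia.
have lle' : forall a, a < 2 * c -> l a <= 1 by move=> *; apply: lle.
have tle' : forall b, b < 2 * r -> t b <= 1 by move=> *; apply: tle.
case: (classic (exists a, a.+1 < 2 * c /\ l a = 0 /\ l a.+1 = 1)) => [[a0 [ha0 [e1 e2]]] | nex].
{ have tdec : forall b, b.+1 < 2 * r -> t b.+1 <= t b.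
    move=> b hb; case: (leqP (t b.+1) (t b)) => // hlt; exfalso.
    apply: (T1 a0 b ha0 hb e1) => //; have := tle b; have := tle b.+1; lia.
  have tch := mono_dec tle' sumt tdec.
  have linc : forall a, a.+1 < 2 * c -> l a <= l a.+1.
    move=> a ha; case: (leqP (l a) (l a.+1)) => // hlt; exfalso.
    have := tch r.-1 ltac:(lia); have := tch r.-1.+1 ltac:(lia).
    have := T2 a r.-1 ha ltac:(lia); have := lle a; have := lle a.+1; have := tle r.-1.+1; lia.
  have lch := mono_inc lle' suml linc.
  left; move=> i j hi hj.
  have [a [x [hx ei]]] : exists a x, x < 2 /\ i = 2 * a + x by exists (i %/ 2), (i %% 2); lia.
  have [b [y [hy ej]]] : exists b y, y < 2 /\ j = 2 * b + y by exists (j %/ 2), (j %% 2); lia.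
  subst i j.
  have ha : a < 2 * c by lia.
  have hb : b < 2 * r by lia.
  have ela : l a = (c <= a) by have := lch a ha; have := lle a; case: leqP; lia.
  have etb : t b = (b < r) by have := tch b hb; have := tle b; case: ltnP; lia.
  exact: (finA hx hy ela etb (BC (2 * b) a ltac:(lia) ha) (Lh a b ha hb) (Th a b ha hb)). }
{ have ldec : forall a, a.+1 < 2 * c -> l a.+1 <= l a.
    move=> a ha; case: (leqP (l a.+1) (l a)) => // hlt; exfalso.
    apply: nex; exists a; have := lle a; have := lle a.+1; lia.
  have lch := mono_dec lle' suml ldec.
  have tinc : forall b, b.+1 < 2 * r -> t b <= t b.+1.
    move=> b hb; case: (leqP (t b) (t b.+1)) => // hlt; exfalso.
    have := lch c.-1 ltac:(lia); have := lch c.-1.+1 ltac:(lia).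
    have := T2 c.-1 b ltac:(lia) hb; have := tle b; have := tle b.+1; have := lle c.-1.+1; lia.
  have tch := mono_inc tle' sumt tinc.
  right; move=> i j hi hj.
  have [a [x [hx ei]]] : exists a x, x < 2 /\ i = 2 * a + x by exists (i %/ 2), (i %% 2); lia.
  have [b [y [hy ej]]] : exists b y, y < 2 /\ j = 2 * b + y by exists (j %/ 2), (j %% 2); lia.
  subst i j.
  have ha : a < 2 * c by lia.
  have hb : b < 2 * r by lia.
  have ela : l a = (a < c) by have := lch a ha; have := lle a; case: ltnP; lia.
  have etb : t b = (r <= b) by have := tch b hb; have := tle b; case: leqP; lia.
  exact: (finB ha hx hy ela etb (BC (2 * b) a ltac:(lia) ha) (Lh a b ha hb) (Th a b ha hb)). }
Qed.

Lemma sh1b_adj c r i j i' j' : sh1b c r i j -> sh1b c r i' j' -> i <= i' + 1 -> i' <= i + 1 ->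
  j <= j' + 1 -> j' <= j + 1 -> i = i' /\ j = j'.
Proof. rewrite /sh1b => *; lia. Qed.

Lemma sh1b_col c r a b y : y < 2 ->
  (sh1b c r (2 * a) (2 * b + y) || sh1b c r (2 * a).+1 (2 * b + y)) = ((y == 1) == (a < c)).
Proof.
move=> hy; have e0 := sh1b_2 c r a b (ltn0Sn 1) hy; have e1 := sh1b_2 c r a b (ltnSn 1) hy.
rewrite addn0 in e0; rewrite addn1 in e1; rewrite e0 e1; lia.
Qed.

Lemma sh1b_row c r a b x : x < 2 ->
  (sh1b c r (2 * a + x) (2 * b) || sh1b c r (2 * a + x) (2 * b).+1) = ((x == 1) == (r <= b)).
Proof.
move=> hx; have e0 := sh1b_2 c r a b hx (ltn0Sn 1); have e1 := sh1b_2 c r a b hx (ltnSn 1).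
rewrite addn0 in e0; rewrite addn1 in e1; rewrite e0 e1; lia.
Qed.

Lemma hyp_char c r (f : nat -> nat -> nat) (P : nat -> nat -> bool) :
  (forall i j, f i j <= 1) ->
  (forall i j, f i j = 1 <-> i < 4 * c /\ j < 4 * r /\ P i j) ->
  (forall j, j < 4 * r ->
     (forall a, a < 2 * c -> (P (2 * a) j || P (2 * a).+1 j) = (a < c)) \/
     (forall a, a < 2 * c -> (P (2 * a) j || P (2 * a).+1 j) = (c <= a))) ->
  (forall i, i < 4 * c ->
     (forall b, b < 2 * r -> (P i (2 * b) || P i (2 * b).+1) = (b < r)) \/
     (forall b, b < 2 * r -> (P i (2 * b) || P i (2 * b).+1) = (r <= b))) ->
  (forall i j i' j', i < 4 * c -> i' < 4 * c -> P i j -> P i' j' -> i <= i' + 1 -> i' <= i + 1 ->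
     j <= j' + 1 -> j' <= j + 1 -> i = i' /\ j = j') ->
  Hyp (4 * c) (4 * r) c r f.
Proof.
move=> H1 Hch Hcol Hrow Hadj; split => //.
- move=> j hj.
  rewrite (_ : 4 * c = 2 * (2 * c)); last lia.
  rewrite (pair_sum (fun i => f i j)); apply: (half_sum (h := fun a => f (2 * a) j + f (2 * a).+1 j)).
    move=> a ha; have := Hch (2 * a) j; have := Hch (2 * a).+1 j.
    have := H1 (2 * a) j; have := H1 (2 * a).+1 j.
    have := Hadj (2 * a) j (2 * a).+1 j; lia.
  case: (Hcol j hj) => H; [left | right] => a ha; have := H a ha;
    have := Hch (2 * a) j; have := Hch (2 * a).+1 j;
    have := H1 (2 * a) j; have := H1 (2 * a).+1 j;
    have := Hadj (2 * a) j (2 * a).+1 j; lia.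
- move=> i hi.
  rewrite (_ : 4 * r = 2 * (2 * r)); last lia.
  rewrite (pair_sum (fun j => f i j)); apply: (half_sum (h := fun b => f i (2 * b) + f i (2 * b).+1)).
    move=> b hb; have := Hch i (2 * b); have := Hch i (2 * b).+1.
    have := H1 i (2 * b); have := H1 i (2 * b).+1.
    have := Hadj i (2 * b) i (2 * b).+1; lia.
  case: (Hrow i hi) => H; [left | right] => b hb; have := H b hb;
    have := Hch i (2 * b); have := Hch i (2 * b).+1;
    have := H1 i (2 * b); have := H1 i (2 * b).+1;
    have := Hadj i (2 * b) i (2 * b).+1; lia.
- move=> i j i' j' /Hch [hi [hj p1]] /Hch [hi' [hj' p2]]; exact: Hadj.
Qed.

Lemma sh1_at_eq c r i j : i < 4 * c -> j < 4 * r -> shuriken1_at c r i.+1 j.+1 = sh1b c r i j.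
Proof.
move=> hi hj.
have [a [x [hx ei]]] : exists a x, x < 2 /\ i = 2 * a + x by exists (i %/ 2), (i %% 2); lia.
have [b [y [hy ej]]] : exists b y, y < 2 /\ j = 2 * b + y by exists (j %/ 2), (j %% 2); lia.
subst i j; rewrite sh1b_2 //.
apply/idP/idP.
- case/existsP => i' /existsP [j' H]; have := ltn_ord i'; have := ltn_ord j'; move: H; lia.
- move=> H; have ha : a.+1 < (2 * c).+1 by lia.
  have hb : b.+1 < (2 * r).+1 by lia.
  apply/existsP; exists (Ordinal ha); apply/existsP; exists (Ordinal hb); rewrite /=; move: H; lia.
Qed.

Lemma fS_sh1 c r i j : fS (shuriken1 c r) i j = 1 <-> i < 4 * c /\ j < 4 * r /\ sh1b c r i j.
Proof.
split.
- by move/fS_1 => [hi [hj]]; rewrite inE /= sh1_at_eq.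
- case=> hi [hj h]; have := fS_ord (shuriken1 c r) (Ordinal hi) (Ordinal hj).
  by rewrite /= inE /= sh1_at_eq // h => ->.
Qed.

Lemma fS_sh2 c r i j : fS (shuriken2 c r) i j = 1 <-> i < 4 * c /\ j < 4 * r /\ sh1b c r (4 * c - i.+1) j.
Proof.
split.
- move/fS_1 => [hi [hj]]; rewrite !inE /= sh1_at_eq //; lia.
- case=> hi [hj h]; have := fS_ord (shuriken2 c r) (Ordinal hi) (Ordinal hj).
  rewrite /= !inE /= sh1_at_eq //; last lia.
  by rewrite h => ->.
Qed.

Theorem theorem2 (c r : nat) (hc : 0 < c) (hr : 0 < r) :
  (* (i) lower bound on grid size *)
  (forall (m n : nat) (S : {set 'I_m * 'I_n}),
     0 < m -> 0 < n -> (m, n) <> (1, 1) ->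
     valid_config c r S -> 4 * c <= m /\ 4 * r <= n) /\
  (* the 1 x 1 grid admits a configuration only when c = r = 1 *)
  (forall S : {set 'I_1 * 'I_1}, valid_config c r S -> c = 1 /\ r = 1) /\
  (* (ii) exactly two configurations on the 4c x 4r grid *)
  shuriken1 c r <> shuriken2 c r /\
  (forall S : {set 'I_(4 * c) * 'I_(4 * r)},
     valid_config c r S <-> S = shuriken1 c r \/ S = shuriken2 c r).
Proof.
split; [|split; [|split]].
- move=> m n S hm hn hmn /valid_hyp H.
  case: (ltnP 1 m) => hm1.
    case: (ltnP 1 n) => hn1.
      by split; [exact: bound H hc hr hn1 | exact: bound (hyp_T H) hr hc hm1].
    have en : n = 1 by lia.
    subst n; exfalso; exact: n1 H hr hm1.
  have em : m = 1 by lia.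
  subst m; case: (ltnP 1 n) => hn1.
    exfalso; exact: n1 (hyp_T H) hc hn1.
  by exfalso; apply: hmn; congr pair; lia.
- move=> S /valid_hyp [H1 Hc Hr _].
  have := Hc 0 erefl; have := Hr 0 erefl; rewrite !big_ord1 /=; have := H1 0 0; lia.
- move=> E.
  have h1 := fS_sh1 c r 0 1; have h2 := fS_sh2 c r 0 1.
  rewrite E in h1.
  have : sh1b c r 0 1 by rewrite /sh1b; lia.
  have : ~~ sh1b c r (4 * c - 1) 1.
    have -> : 4 * c - 1 = 2 * (2 * c - 1) + 1 by lia.
    rewrite (_ : 1 = 2 * 0 + 1) // sh1b_2 //; lia.
  lia.
- move=> S; split.
  + move/valid_hyp => H.
    case: (uniq44 hc hr H) => Hch; [left | right]; apply/setP => -[i j].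
      have E : fS S i j = fS (shuriken1 c r) i j.
        have := Hch i j (ltn_ord i) (ltn_ord j); have := fS_sh1 c r i j.
        have := fS_le1 S i j; have := fS_le1 (shuriken1 c r) i j.
        have := ltn_ord i; have := ltn_ord j; lia.
      by move: E; rewrite !fS_ord; do 2 case: (_ \in _).
    have E : fS S i j = fS (shuriken2 c r) i j.
      have := Hch i j (ltn_ord i) (ltn_ord j); have := fS_sh2 c r i j.
      have := fS_le1 S i j; have := fS_le1 (shuriken2 c r) i j.
      have := ltn_ord i; have := ltn_ord j; lia.
    by move: E; rewrite !fS_ord; do 2 case: (_ \in _).
  + case=> ->; apply: hyp_valid.
      apply: (hyp_char (P := sh1b c r) (fS_le1 _) (@fS_sh1 c r)).
      * move=> j hj.
        have [b [y [hy ej]]] : exists b y, y < 2 /\ j = 2 * b + y by exists (j %/ 2), (j %% 2); lia.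
        subst j; case: y hy hj => [|[|y]] hy hj //; [right | left] => a ha; rewrite sh1b_col //; lia.
      * move=> i hi.
        have [a [x [hx ei]]] : exists a x, x < 2 /\ i = 2 * a + x by exists (i %/ 2), (i %% 2); lia.
        subst i; case: x hx hi => [|[|x]] hx hi //; [left | right] => b hb; rewrite sh1b_row //; lia.
      * by move=> i j i' j' _ _; apply: sh1b_adj.
    apply: (hyp_char (P := fun i j => sh1b c r (4 * c - i.+1) j) (fS_le1 _) (@fS_sh2 c r)).
    * move=> j hj.
      have [b [y [hy ej]]] : exists b y, y < 2 /\ j = 2 * b + y by exists (j %/ 2), (j %% 2); lia.
      have E : forall a, a < 2 * c ->
          (sh1b c r (4 * c - (2 * a).+1) j || sh1b c r (4 * c - (2 * a).+2) j) =
          ((y == 1) == (2 * c - 1 - a < c)).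
        move=> a ha.
        have -> : 4 * c - (2 * a).+1 = (2 * (2 * c - 1 - a)).+1 by lia.
        have -> : 4 * c - (2 * a).+2 = 2 * (2 * c - 1 - a) by lia.
        by rewrite orbC ej sh1b_col.
      case: y hy ej E => [|[|y]] hy ej E //; [left | right] => a ha /=; rewrite E //; lia.
    * move=> i hi.
      have [a [x [hx ei]]] : exists a x, x < 2 /\ 4 * c - i.+1 = 2 * a + x
        by exists ((4 * c - i.+1) %/ 2), ((4 * c - i.+1) %% 2); lia.
      case: x hx ei => [|[|x]] hx ei //; [left | right] => b hb /=; rewrite ei sh1b_row //; lia.
    * move=> i j i' j' hi hi' p1 p2 h1 h2 h3 h4.
      have [e1 e2] := sh1b_adj p1 p2 ltac:(lia) ltac:(lia) h3 h4.
      split => //; lia.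
Qed.
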